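(* Two unital formal multiplications $F_1,F_2$ on $V$ are similar if and only if there exists a similarity $\Phi$ on $V$ such that $F_1(\mu\otimes\nu)=\sum F_2\big(\mu_{(1)}\otimes\Phi'(\mu_{(2)}\otimes\nu)\big)$ for all $\mu,\nu\in k[V]$ (i.e. $F_1(\mathbf{x},\mathbf{y})=F_2(\mathbf{x},\Phi(\mathbf{x},\mathbf{y}))$).
   Context: $k$ is a field of characteristic $0$; $k[V]$ is the symmetric algebra of $V$ with the coalgebra structure in which elements of $V$ are primitive, counit $\epsilon$ (degree-0 projection), $\pi_V$ the projection onto $V$, Sweedler notation; $k[V]_{\ge1}$ is the sum of symmetric powers of degree $\ge1$. A unital formal multiplication on $V$ is a linear map $F\colon k[V]\otimes k[V]\to V$ with $F(\mu\otimes1)=\pi_V(\mu)=F(1\otimes\mu)$. For a linear map $\Phi\colon k[V]\otimes k[V]\to V$ with $\Phi(1\otimes 1)=0$, $\Phi'(\xi)=\sum_{n\ge0}\frac1{n!}\Phi(\xi_{(1)})\cdots\Phi(\xi_{(n)})$ is the induced coalgebra morphism to $k[V]$. A similarity is a linear map $\Phi\colon k[V]\otimes k[V]\to V$ with $\Phi|_{1\otimes k[V]}=\pi_V$ and $\Phi|_{k[V]_{\ge1}\otimes(k1\oplus V)}=0$. Two unital formal multiplications are similar if their restrictions to $k[V]\otimes V$ coincide. *)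

(* Defs.v *)
From HB Require Import structures.
From mathcomp Require Import all_boot all_order all_algebra.
Set Implicit Arguments. Unset Strict Implicit. Unset Printing Implicit Defensive.
Import Order.TTheory GRing.Theory Num.Theory.
Local Open Scope ring_scope.

(* Model of k[V] (symmetric algebra of V, elements of V primitive).
   A monomial v_1 v_2 ... v_n of k[V] is represented by the word
   [:: v_1; ...; v_n] : seq V ([::] is the unit 1).  Monomials span k[V],
   and a linear map k[V] (x) k[V] -> V is the same thing as a map
   F : seq V -> seq V -> V that is linear in each letter of each word and
   invariant under permutations of the letters of each word. *)

Section KV.
Variables (k : fieldType) (V : lmodType k).

Definition is_lin2 (F : seq V -> seq V -> V) : Prop :=
  [/\ (forall u1 u2 w (a : k) (x y : V),
         F (u1 ++ (a *: x + y) :: u2) w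
         = a *: F (u1 ++ x :: u2) w + F (u1 ++ y :: u2) w),
      (forall u w1 w2 (a : k) (x y : V),
         F u (w1 ++ (a *: x + y) :: w2)
         = a *: F u (w1 ++ x :: w2) + F u (w1 ++ y :: w2)),
      (forall u u' w, perm_eq u u' -> F u w = F u' w) &
      (forall u w w', perm_eq w w' -> F u w = F u w')].

Definition piV (u : seq V) : V := if u is [:: v] then v else 0.

Definition unital_fmul (F : seq V -> seq V -> V) : Prop :=
  is_lin2 F /\ (forall u, F u [::] = piV u /\ F [::] u = piV u).

Definition is_similarity (Phi : seq V -> seq V -> V) : Prop :=
  [/\ is_lin2 Phi,
      (forall w, Phi [::] w = piV w) &
      (forall u w, (0 < size u)%N -> (size w <= 1)%N -> Phi u w = 0)].

Definition similar_fmul (F1 F2 : seq V -> seq V -> V) : Prop :=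
  forall u (v : V), F1 u [:: v] = F2 u [:: v].

Definition blk (u : seq V) (n : nat) (f : {ffun 'I_(size u) -> 'I_n})
  (j : 'I_n) : seq V :=
  [seq nth 0 u (nat_of_ord i) | i <- enum 'I_(size u) & f i == j].

(* Phi'(u (x) w) = sum_{n>=0} 1/n! Phi(xi_(1)) ... Phi(xi_(n)), with
   xi = u (x) w, as a formal linear combination of monomials of k[V].
   The n-fold iterated coproduct of u (x) w is the sum over all
   distributions f, g of the letters of u, w into n boxes of
   (x)_j (blk u f j (x) blk w g j).  Terms with n > size u + size w
   contain some factor Phi(1 (x) 1) = 0, hence vanish; they are omitted. *)
Definition Phi' (Phi : seq V -> seq V -> V) (u w : seq V) : seq (k * seq V) :=
  flatten [seq [seq ((n`!%:R)^-1,
                     [seq Phi (blk fg.1 j) (blk fg.2 j) | j <- enum 'I_n])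
               | fg <- enum {: {ffun 'I_(size u) -> 'I_n}
                              * {ffun 'I_(size w) -> 'I_n}}]
          | n <- iota 0 (size u + size w).+1].

Definition lin_ext (F : seq V -> seq V -> V) (u : seq V)
  (p : seq (k * seq V)) : V :=
  \sum_(x <- p) x.1 *: F u x.2.

(* sum F2(mu_(1) (x) Phi'(mu_(2) (x) nu)) for mu = u, nu = w monomials;
   Delta(v_1...v_n) = sum over subsets S of positions of v_S (x) v_{S^c}. *)
Definition compose (F2 Phi : seq V -> seq V -> V) (u w : seq V) : V :=
  \sum_(m : (size u).-tuple bool)
     lin_ext F2 (mask m u) (Phi' Phi (mask (map negb m) u) w).

End KV.

(* Main.v *)
Require Import Defs.
From HB Require Import structures.
From mathcomp Require Import all_boot all_order all_algebra.
From mathcomp Require Import all_fingroup zify.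
Set Implicit Arguments. Unset Strict Implicit. Unset Printing Implicit Defensive.
Import Order.TTheory GRing.Theory Num.Theory.
Local Open Scope ring_scope.

Section S.
Variables (k : fieldType) (V : lmodType k).
Implicit Types (F Phi Psi : seq V -> seq V -> V) (u w a b x : seq V).

Definition blkG (N : nat) (a : seq V) (n : nat) (f : {ffun 'I_N -> 'I_n}) (j : 'I_n) : seq V :=
  [seq nth 0 a (nat_of_ord i) | i <- enum 'I_N & f i == j].

Definition TG (Phi : seq V -> seq V -> V) (N M : nat) (a w : seq V) (n : nat)
  (fg : {ffun 'I_N -> 'I_n} * {ffun 'I_M -> 'I_n}) : seq V :=
  [seq Phi (blkG a fg.1 j) (blkG w fg.2 j) | j <- enum 'I_n].

Definition SG (F Phi : seq V -> seq V -> V) (x : seq V) (N M : nat) (a w : seq V) : V :=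
  \sum_(n < (N + M).+1) \sum_(fg : {ffun 'I_N -> 'I_n} * {ffun 'I_M -> 'I_n})
     (n`!%:R)^-1 *: F x (TG Phi a w fg).

Lemma linextE F Phi x a w : lin_ext F x (Phi' Phi a w) = SG F Phi x (size a) (size w) a w.
Proof.
rewrite /lin_ext /Phi' big_flatten big_map /SG.
rewrite (_ : iota 0 _ = index_iota 0 (size a + size w).+1); last by rewrite /index_iota subn0.
rewrite big_mkord; apply: eq_bigr => n _.
by rewrite big_map big_enum.
Qed.

Lemma F0letter F u w1 w2 : is_lin2 F -> F u (w1 ++ 0 :: w2) = 0.
Proof.
case=> _ H2 _ _; have := H2 u w1 w2 1 0 0.
rewrite scale1r addr0 => /eqP; rewrite -subr_eq subrr eq_sym => /eqP; rewrite scale1r.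
by [].
Qed.

Lemma F0mem F u w : is_lin2 F -> (0 : V) \in w -> F u w = 0.
Proof. by move=> hF /splitPr [w1 w2]; apply: F0letter. Qed.

Lemma sum_uniq (T : finType) (y0 : T) (G : T -> V) :
  (forall y, y = y0) -> \sum_y G y = G y0.
Proof.
move=> H; rewrite (bigD1 y0) //= big1 => [|y /eqP []]; last exact: H.
by rewrite addr0.
Qed.

Definition o0 n (i : 'I_0) : 'I_n. Proof. by case: i. Defined.

Lemma ffun0_eq n (f g : {ffun 'I_0 -> 'I_n}) : f = g.
Proof. by apply/ffunP => -[]. Qed.

Lemma ffun1_eq N (f g : {ffun 'I_N -> 'I_1}) : f = g.
Proof. by apply/ffunP => i; rewrite !ord1. Qed.

Lemma size_blk N a n (f : {ffun 'I_N -> 'I_n}) j :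
  size (blkG a f j) = count (fun i => f i == j) (enum 'I_N).
Proof. by rewrite /blkG size_map size_filter. Qed.

Lemma size_blk_le N a n (f : {ffun 'I_N -> 'I_n}) j : (size (blkG a f j) <= N)%N.
Proof. by rewrite size_blk (leq_trans (count_size _ _)) // size_enum_ord. Qed.

Lemma size_blk_gt0 N a n (f : {ffun 'I_N -> 'I_n}) i : (0 < size (blkG a f (f i)))%N.
Proof. by rewrite size_blk -has_count; apply/hasP; exists i; rewrite ?mem_enum. Qed.

Lemma enum_nth N (a : seq V) : size a = N -> [seq nth 0 a (nat_of_ord i) | i <- enum 'I_N] = a.
Proof.
move=> <-; rewrite (map_comp (nth 0 a) val) val_enum_ord.
exact: (mkseq_nth 0 a).
Qed.

Lemma blk_all N a n (f : {ffun 'I_N -> 'I_n}) j : size a = N -> (forall i, f i = j) -> blkG a f j = a.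
Proof.
move=> Ha Hf; rewrite /blkG (eq_filter (a2 := predT)) ?filter_predT ?enum_nth //.
by move=> i; rewrite Hf eqxx.
Qed.

Lemma blk0 n a (f : {ffun 'I_0 -> 'I_n}) j : blkG a f j = [::].
Proof. by apply/size0nil; have := size_blk_le a f j; rewrite leqn0 => /eqP. Qed.

Lemma mask_negb_gt0 (u : seq V) (m : (size u).-tuple bool) :
  m != [tuple of nseq (size u) true] -> (0 < size (mask (map negb m) u))%N.
Proof.
move=> Hm; rewrite size_mask ?size_map ?size_tuple // lt0n; apply: contra Hm => /eqP H0.
apply/eqP/val_inj => /=.
move: H0; rewrite count_map (eq_count (a2 := predC id)) // => H0.
have Hc := count_predC id m.
rewrite H0 addn0 size_tuple in Hc.
have : all (pred1 true) m by rewrite (eq_all (a2 := id)) ?all_count ?Hc ?size_tuple // => b; rewrite /= eqb_id.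
by move/all_pred1P; rewrite size_tuple.
Qed.

Lemma compose_split F Phi u w :
  compose F Phi u w = SG F Phi u 0 (size w) [::] w +
    \sum_(m : (size u).-tuple bool | m != [tuple of nseq (size u) true])
       SG F Phi (mask m u) (size (mask (map negb m) u)) (size w) (mask (map negb m) u) w.
Proof.
rewrite /compose (bigD1 [tuple of nseq (size u) true]) //=; congr (_ + _).
  by rewrite map_nseq mask_false mask_true // linextE.
by apply: eq_bigr => m _; rewrite linextE.
Qed.

Lemma SG_zero F Phi x N M a w : is_lin2 F ->
  (forall n (fg : {ffun 'I_N -> 'I_n} * {ffun 'I_M -> 'I_n}), exists j, Phi (blkG a fg.1 j) (blkG w fg.2 j) = 0) ->
  SG F Phi x N M a w = 0.
Proof.
move=> hF H; rewrite /SG big1 // => n _; rewrite big1 // => fg _.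
have [j Hj] := H n fg; rewrite (F0mem _ hF) ?scaler0 //.
by rewrite -Hj; apply/mapP; exists j; rewrite ?mem_enum.
Qed.

Lemma lemK F Phi u w : is_lin2 F -> (size w <= 1)%N ->
  (forall b, (size b <= size w)%N -> Phi [::] b = piV b) ->
  (forall a b, (0 < size a)%N -> (size b <= size w)%N -> Phi a b = 0) ->
  compose F Phi u w = F u w.
Proof.
move=> hF Hw H1 H2; rewrite compose_split big1 ?addr0; last first.
  move=> m Hm; apply: SG_zero => // n fg.
  have Ha := mask_negb_gt0 Hm.
  exists (fg.1 (Ordinal Ha)); apply: H2; first exact: size_blk_gt0.
  by rewrite size_blk_le.
case: w Hw H1 H2 => [|v [|//]] _ H1 H2.
  rewrite /SG big_ord1 (sum_uniq (y0 := ([ffun i => o0 _ i], [ffun i => o0 _ i]))).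
    by rewrite /TG enum_ord0 /= invr1 scale1r.
  by case=> f g; congr pair; apply: ffun0_eq.
rewrite /SG big_ord_recr /= big1 ?add0r; last first.
  move=> [[|//] Hn] _; rewrite big1 // => fg; by case: (fg.2 ord0).
rewrite (sum_uniq (y0 := ([ffun i => ord_max], [ffun i => ord_max]))); last first.
  by case=> f g; congr pair; apply: ffun1_eq.
rewrite /TG enum_ordSl enum_ord0 /= blk0 blk_all //= ?H1 // ?invr1 ?scale1r //.
by move=> i; apply/val_inj; rewrite ffunE.
Qed.

Lemma SG00 F Phi x : SG F Phi x 0 0 [::] [::] = F x [::].
Proof.
rewrite /SG big_ord1 (sum_uniq (y0 := ([ffun i => o0 _ i], [ffun i => o0 _ i]))).
  by rewrite /TG enum_ord0 /= invr1 scale1r.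
by case=> f g; congr pair; apply: ffun0_eq.
Qed.

Lemma tuple_nseq_count N (m : N.-tuple bool) (bb : bool) :
  m != [tuple of nseq N bb] -> (count (pred1 bb) m < N)%N.
Proof.
move=> Hm; rewrite ltn_neqAle (leq_trans (count_size _ _)) ?size_tuple // andbT.
apply: contra Hm => /eqP Hc; apply/eqP/val_inj => /=.
have : all (pred1 bb) m by rewrite all_count Hc size_tuple.
by move/all_pred1P; rewrite size_tuple.
Qed.

Lemma compose_split0 F Phi w :
  compose F Phi [::] w = SG F Phi [::] 0 (size w) [::] w.
Proof.
rewrite compose_split big1 ?addr0 // => m.
by rewrite [m]tuple0 [X in _ != X]tuple0 eqxx.
Qed.

Lemma comp00 F Phi : compose F Phi [::] [::] = F [::] [::].
Proof. by rewrite compose_split0 SG00. Qed.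

Lemma piV_size (s : seq V) : size s != 1%N -> piV s = 0.
Proof. by case: s => [|v [|]]. Qed.

Lemma size_TG Phi N M a w n (fg : {ffun 'I_N -> 'I_n} * {ffun 'I_M -> 'I_n}) :
  size (TG Phi a w fg) = n.
Proof. by rewrite /TG size_map size_enum_ord. Qed.

Lemma SG1 F Phi N M a w : size a = N -> size w = M -> (forall s, F [::] s = piV s) ->
  \sum_(fg : {ffun 'I_N -> 'I_1} * {ffun 'I_M -> 'I_1})
     (1`!%:R)^-1 *: F [::] (TG Phi a w fg) = Phi a w.
Proof.
move=> Ha Hw HF.
rewrite (sum_uniq (y0 := ([ffun i => ord0], [ffun i => ord0]))); last first.
  by case=> f g; congr pair; apply: ffun1_eq.
rewrite /TG enum_ordSl enum_ord0 /= !blk_all // ?invr1 ?scale1r ?HF //.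
  by move=> i; rewrite ffunE.
by move=> i; rewrite ffunE.
Qed.

Lemma R0 F Phi w : w != [::] -> (forall s, F [::] s = piV s) ->
  compose F Phi [::] w = Phi [::] w.
Proof.
move=> Hw HF; rewrite compose_split0 /SG.
have H1 : (1 < (0 + size w).+1)%N by rewrite add0n ltnS lt0n size_eq0.
rewrite (bigD1 (Ordinal H1)) //= (@SG1 F Phi 0 (size w) [::] w) ?HF //.
rewrite big1 ?addr0 // => n Hn; rewrite big1 // => fg _.
rewrite HF piV_size ?scaler0 // size_TG.
by apply: contra Hn => /eqP Hn; apply/eqP/val_inj.
Qed.

Lemma SG_eq_small F Phi Psi x N M a w :
  (forall a' b, (size a' + size b <= N + M)%N -> Phi a' b = Psi a' b) ->
  SG F Phi x N M a w = SG F Psi x N M a w.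
Proof.
move=> H; apply: eq_bigr => n _; apply: eq_bigr => fg _.
congr (_ *: F x _); apply: eq_map => j; apply: H.
by rewrite leq_add ?size_blk_le.
Qed.

Lemma blk_disj N a n (f : {ffun 'I_N -> 'I_n}) j j' : j != j' ->
  (size (blkG a f j) + size (blkG a f j') <= N)%N.
Proof.
move=> Hj; rewrite !size_blk -count_predUI.
rewrite (eq_count (a1 := predI _ _) (a2 := pred0)); last first.
  by move=> i /=; apply/andP => -[/eqP -> /eqP]; apply/eqP.
by rewrite count_pred0 addn0 (leq_trans (count_size _ _)) // size_enum_ord.
Qed.

Lemma exists_other n (j : 'I_n) : n != 1%N -> exists j' : 'I_n, j' != j.
Proof.
case: n j => [[]//|[|n]] [[|jj] Hj] //= _.
  by exists (inord 1); apply/eqP => /(congr1 val) /=; rewrite inordK.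
by exists (inord 0); apply/eqP => /(congr1 val) /=; rewrite inordK.
Qed.

Lemma SG_eq_big F Phi Psi N M a w :
  size a = N -> size w = M -> (0 < N + M)%N -> is_lin2 F ->
  (forall s, F [::] s = piV s) -> Phi [::] [::] = 0 -> Psi [::] [::] = 0 ->
  (forall a' b, (size a' + size b < N + M)%N -> Phi a' b = Psi a' b) ->
  SG F Phi [::] N M a w - Phi a w = SG F Psi [::] N M a w - Psi a w.
Proof.
move=> Ha Hw HL hF HF P0 Q0 H.
have H1 : (1 < (N + M).+1)%N by [].
rewrite /SG (bigD1 (Ordinal H1)) // [in RHS](bigD1 (Ordinal H1)) //= !(@SG1 F _ N M a w) //.
rewrite ![Phi a w + _]addrC ![Psi a w + _]addrC !addrK.
apply: eq_bigr => n Hn; apply: eq_bigr => fg _.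
case: (boolP [forall j, (size (blkG a fg.1 j) + size (blkG w fg.2 j) < N + M)%N]).
  move/forallP => Hall; congr (_ *: F _ _); apply: eq_map => j; exact: H.
move/forallPn => [j]; rewrite -leqNgt => Hj.
have Hn1 : (n : nat) != 1%N by apply: contra Hn => /eqP Hn; apply/eqP/val_inj.
have [j' Hj'] := exists_other j Hn1.
have Ea := blk_disj a fg.1 Hj'; have Ew := blk_disj w fg.2 Hj'.
have Sa := size_blk_le a fg.1 j; have Sw := size_blk_le w fg.2 j.
have /size0nil Ba : size (blkG a fg.1 j') = 0%N by lia.
have /size0nil Bw : size (blkG w fg.2 j') = 0%N by lia.
rewrite !(F0mem _ hF) ?scaler0 //; apply/mapP; exists j'; rewrite ?mem_enum ?Ba ?Bw //.
Qed.

Lemma count_negb_mask (u : seq V) (m : (size u).-tuple bool) :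
  size (mask (map negb m) u) = count (pred1 false) m.
Proof.
rewrite size_mask ?size_map ?size_tuple // count_map.
by apply: eq_count => bb /=; rewrite eqbF_neg.
Qed.

Lemma Loc F Phi Psi u w : is_lin2 F -> (forall s, F [::] s = piV s) ->
  Phi [::] [::] = 0 -> Psi [::] [::] = 0 ->
  (forall a b, (size a + size b < size u + size w)%N -> Phi a b = Psi a b) ->
  compose F Phi u w - Phi u w = compose F Psi u w - Psi u w.
Proof.
move=> hF HF P0 Q0 H.
have [|HL] := boolP (size u + size w == 0)%N.
  rewrite addn_eq0 => /andP [/eqP/size0nil -> /eqP/size0nil ->].
  by rewrite !comp00 P0 Q0.
rewrite /compose (bigD1 [tuple of nseq (size u) false]) // [in RHS](bigD1 [tuple of nseq (size u) false]) //=.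
rewrite map_nseq mask_false mask_true // !linextE.
rewrite [LHS]addrAC [RHS]addrAC; congr (_ + _).
  by apply: SG_eq_big => //; rewrite lt0n.
apply: eq_bigr => m Hm; rewrite !linextE; apply: SG_eq_small => a' b Hab.
apply: H; rewrite (leq_ltn_trans Hab) // ltn_add2r count_negb_mask.
exact: tuple_nseq_count.
Qed.

End S.

Section S4.
Variables (k : fieldType) (V : lmodType k).
Implicit Types (F Phi Psi : seq V -> seq V -> V) (u w a b x : seq V).

Definition linf (h : V -> V) := forall (c : k) (y1 y2 : V), h (c *: y1 + y2) = c *: h y1 + h y2.

Lemma linf_ext (h h' : V -> V) : (forall z, h z = h' z) -> linf h' -> linf h.
Proof. by move=> E H c y1 y2; rewrite !E. Qed.

Lemma linf_sum (I : Type) (r : seq I) (P : pred I) (G : I -> V -> V) :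
  (forall i, P i -> linf (G i)) -> linf (fun z => \sum_(i <- r | P i) G i z).
Proof.
move=> H c y1 y2; rewrite scaler_sumr -big_split; apply: eq_bigr => i Pi.
exact: H.
Qed.

Lemma linf_scale (c0 : k) (h : V -> V) : linf h -> linf (fun z => c0 *: h z).
Proof. by move=> H c y1 y2; rewrite H scalerDr !scalerA mulrC. Qed.

Lemma linf_comp (g h : V -> V) : linf g -> linf h -> linf (fun z => g (h z)).
Proof. by move=> Hg Hh c y1 y2; rewrite Hh Hg. Qed.

Lemma set_nth_cat (u1 u2 : seq V) v z : set_nth 0 (u1 ++ v :: u2) (size u1) z = u1 ++ z :: u2.
Proof. by elim: u1 => //= y u1 ->. Qed.

Lemma set_nth_split (T : seq V) q z : (q < size T)%N ->
  set_nth 0 T q z = take q T ++ z :: drop q.+1 T.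
Proof.
move=> Hq; rewrite -{1}(cat_take_drop q T) (drop_nth 0 Hq).
have Hs : size (take q T) = q by rewrite size_take Hq.
by rewrite -[X in set_nth _ _ X _]Hs set_nth_cat.
Qed.

Lemma LF1 F T w q : is_lin2 F -> (q < size T)%N -> linf (fun z => F (set_nth 0 T q z) w).
Proof. by case=> H1 _ _ _ Hq c y1 y2; rewrite !set_nth_split // H1. Qed.

Lemma LF2 F x T q : is_lin2 F -> (q < size T)%N -> linf (fun z => F x (set_nth 0 T q z)).
Proof. by case=> _ H2 _ _ Hq c y1 y2; rewrite !set_nth_split // H2. Qed.

Lemma map_if_set (I : eqType) (s : seq I) (i0 : I) (h : I -> V) X :
  uniq s -> i0 \in s ->
  [seq (if i == i0 then X else h i) | i <- s] = set_nth 0 [seq h i | i <- s] (index i0 s) X.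
Proof.
elim: s => //= y s IH /andP [ys us]; rewrite in_cons => Hi.
have [Ey|Ny] := eqVneq y i0.
  subst y; rewrite /=; congr (_ :: _); apply/eq_in_map => i Hi'.
  by have [E|//] := eqVneq i i0; subst i; rewrite Hi' in ys.
rewrite /=; rewrite eq_sym (negPf Ny) /= in Hi.
by rewrite IH.
Qed.

Lemma blk_set N a n (f : {ffun 'I_N -> 'I_n}) (i0 : 'I_N) z j :
  blkG (set_nth 0 a i0 z) f j =
  if j == f i0 then set_nth 0 (blkG a f j) (index i0 [seq i <- enum 'I_N | f i == j]) z
  else blkG a f j.
Proof.
rewrite /blkG; under eq_map => i do rewrite nth_set_nth /=.
case: ifP => [/eqP Hj|/eqP Hj].
  rewrite -map_if_set //; last by rewrite mem_filter Hj eqxx mem_enum.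
  by rewrite filter_uniq // enum_uniq.
apply/eq_in_map => i; rewrite mem_filter => /andP [/eqP Hi _].
by case: eqP => // /val_inj E; subst i; case: Hj.
Qed.

Lemma index_blk_lt N a n (f : {ffun 'I_N -> 'I_n}) (i0 : 'I_N) :
  (index i0 [seq i <- enum 'I_N | f i == f i0] < size (blkG a f (f i0)))%N.
Proof.
by rewrite /blkG size_map index_mem mem_filter eqxx mem_enum.
Qed.

Lemma TG_set_a Phi N M a w n (fg : {ffun 'I_N -> 'I_n} * {ffun 'I_M -> 'I_n}) (i0 : 'I_N) z :
  TG Phi (set_nth 0 a i0 z) w fg =
  set_nth 0 (TG Phi a w fg) (index (fg.1 i0) (enum 'I_n))
    (Phi (set_nth 0 (blkG a fg.1 (fg.1 i0)) (index i0 [seq i <- enum 'I_N | fg.1 i == fg.1 i0]) z)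
         (blkG w fg.2 (fg.1 i0))).
Proof.
rewrite /TG -map_if_set ?enum_uniq ?mem_enum //; apply/eq_map => j /=.
by rewrite blk_set; case: ifP => // /eqP ->.
Qed.

Lemma TG_set_w Phi N M a w n (fg : {ffun 'I_N -> 'I_n} * {ffun 'I_M -> 'I_n}) (i0 : 'I_M) z :
  TG Phi a (set_nth 0 w i0 z) fg =
  set_nth 0 (TG Phi a w fg) (index (fg.2 i0) (enum 'I_n))
    (Phi (blkG a fg.1 (fg.2 i0))
       (set_nth 0 (blkG w fg.2 (fg.2 i0)) (index i0 [seq i <- enum 'I_M | fg.2 i == fg.2 i0]) z)).
Proof.
rewrite /TG -map_if_set ?enum_uniq ?mem_enum //; apply/eq_map => j /=.
by rewrite blk_set; case: ifP => // /eqP ->.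
Qed.

Lemma SG_lin_a F Phi x N M a w (i0 : 'I_N) : is_lin2 F -> is_lin2 Phi ->
  linf (fun z => SG F Phi x N M (set_nth 0 a i0 z) w).
Proof.
move=> hF hP; apply: linf_sum => n _; apply: linf_sum => fg _; apply: linf_scale.
move=> c y1 y2; rewrite !TG_set_a.
have Hq : (index (fg.1 i0) (enum 'I_n) < size (TG Phi a w fg))%N by rewrite size_TG -[X in (_ < X)%N](size_enum_ord n) index_mem mem_enum.
by rewrite (LF1 _ hP (index_blk_lt _ _ _)) (LF2 _ hF Hq).
Qed.

Lemma SG_lin_w F Phi x N M a w (i0 : 'I_M) : is_lin2 F -> is_lin2 Phi ->
  linf (fun z => SG F Phi x N M a (set_nth 0 w i0 z)).
Proof.
move=> hF hP; apply: linf_sum => n _; apply: linf_sum => fg _; apply: linf_scale.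
move=> c y1 y2; rewrite !TG_set_w.
have Hq : (index (fg.2 i0) (enum 'I_n) < size (TG Phi a w fg))%N by rewrite size_TG -[X in (_ < X)%N](size_enum_ord n) index_mem mem_enum.
by rewrite (LF2 _ hP (index_blk_lt _ _ _)) (LF2 _ hF Hq).
Qed.

Lemma mktupleE n (T : Type) (f : 'I_n -> T) : (mktuple f : seq T) = map f (enum 'I_n).
Proof. by rewrite -[LHS]map_tnth_enum; apply/eq_map => i; rewrite tnth_mktuple. Qed.

Lemma perm_enum_map N (s : {perm 'I_N}) : perm_eq (map s (enum 'I_N)) (enum 'I_N).
Proof.
apply: uniq_perm.
- by rewrite (map_inj_uniq (@perm_inj _ s)) enum_uniq.
- exact: enum_uniq.
move=> i; rewrite mem_enum; apply/mapP; exists (s^-1 i)%g; rewrite ?mem_enum //.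
by rewrite permKV.
Qed.

Lemma perm_filter_map N (s : {perm 'I_N}) (T : eqType) (G : 'I_N -> T) (P : pred 'I_N) :
  perm_eq [seq G (s i) | i <- enum 'I_N & P (s i)] [seq G i | i <- enum 'I_N & P i].
Proof.
rewrite (map_comp G s) -(filter_map s P); apply: perm_map; apply: perm_filter.
exact: perm_enum_map.
Qed.

Lemma nth_enum_map N (G : 'I_N -> V) (i : 'I_N) : nth 0 [seq G j | j <- enum 'I_N] i = G i.
Proof. by rewrite (nth_map i) ?size_enum_ord // nth_ord_enum. Qed.

Lemma blk_perm N a n (f : {ffun 'I_N -> 'I_n}) (s : {perm 'I_N}) j :
  perm_eq (blkG [seq nth 0 a (s i) | i <- enum 'I_N] [ffun i => f (s i)] j) (blkG a f j).
Proof.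
rewrite /blkG; under eq_map => i do rewrite nth_enum_map.
rewrite (eq_filter (a2 := fun i => f (s i) == j)); last by move=> i; rewrite ffunE.
exact: (perm_filter_map s (fun i => nth 0 a i) (fun i => f i == j)).
Qed.

Lemma SG_perm_a F Phi x N M a w (s : {perm 'I_N}) : is_lin2 Phi ->
  SG F Phi x N M [seq nth 0 a (s i) | i <- enum 'I_N] w = SG F Phi x N M a w.
Proof.
case=> _ _ P1 _; apply: eq_bigr => n _.
rewrite (reindex_inj (h := fun fg : {ffun 'I_N -> 'I_n} * {ffun 'I_M -> 'I_n} =>
   ([ffun i => fg.1 (s i)], fg.2))) /=; last first.
  move=> [f g] [f' g'] /= [Ef ->]; congr pair; apply/ffunP => i.
  by move/ffunP: Ef => /(_ (s^-1 i)%g); rewrite !ffunE permKV.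
apply: eq_bigr => fg _; congr (_ *: F x _); apply/eq_map => j /=.
by apply: P1; apply: blk_perm.
Qed.

Lemma SG_perm_w F Phi x N M a w (s : {perm 'I_M}) : is_lin2 Phi ->
  SG F Phi x N M a [seq nth 0 w (s i) | i <- enum 'I_M] = SG F Phi x N M a w.
Proof.
case=> _ _ _ P2; apply: eq_bigr => n _.
rewrite (reindex_inj (h := fun fg : {ffun 'I_N -> 'I_n} * {ffun 'I_M -> 'I_n} =>
   (fg.1, [ffun i => fg.2 (s i)]))) /=; last first.
  move=> [f g] [f' g'] /= [-> Eg]; congr pair; apply/ffunP => i.
  by move/ffunP: Eg => /(_ (s^-1 i)%g); rewrite !ffunE permKV.
apply: eq_bigr => fg _; congr (_ *: F x _); apply/eq_map => j /=.
by apply: P2; apply: blk_perm.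
Qed.

Lemma perm_sigma a a' : perm_eq a' a ->
  exists s : {perm 'I_(size a)}, a' = [seq nth 0 a (s i) | i <- enum 'I_(size a)].
Proof.
move=> H; have /tuple_permP [s Hs] : perm_eq a' (in_tuple a) by [].
exists s; rewrite Hs mktupleE; apply/eq_map => i.
by rewrite (tnth_nth 0).
Qed.

Lemma lphi_perm_a F Phi x a a' w : is_lin2 Phi -> perm_eq a' a ->
  lin_ext F x (Phi' Phi a' w) = lin_ext F x (Phi' Phi a w).
Proof.
move=> hP H; rewrite !linextE (perm_size H).
have [s ->] := perm_sigma H; exact: SG_perm_a.
Qed.

Lemma lphi_perm_w F Phi x a w w' : is_lin2 Phi -> perm_eq w' w ->
  lin_ext F x (Phi' Phi a w') = lin_ext F x (Phi' Phi a w).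
Proof.
move=> hP H; rewrite !linextE (perm_size H).
have [s ->] := perm_sigma H; exact: SG_perm_w.
Qed.

Lemma linext_perm_x F x x' p : is_lin2 F -> perm_eq x x' ->
  lin_ext F x p = lin_ext F x' p.
Proof. by case=> _ _ P1 _ H; apply: eq_bigr => e _; rewrite (P1 _ _ _ H). Qed.

End S4.

Section S5.
Variables (k : fieldType) (V : lmodType k).
Implicit Types (F Phi Psi : seq V -> seq V -> V) (u w a b x : seq V).

Definition composeG F Phi N u w : V :=
  \sum_(m : N.-tuple bool) lin_ext F (mask m u) (Phi' Phi (mask (map negb m) u) w).

Lemma mask_map (I : Type) (p : pred I) (g : I -> V) (l : seq I) :
  mask (map p l) (map g l) = map g (filter p l).
Proof. by elim: l => //= y l ->; case: (p y). Qed.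

Lemma mask_perm N (s : {perm 'I_N}) (p : pred 'I_N) u : size u = N ->
  perm_eq (mask [seq p (s i) | i <- enum 'I_N] [seq nth 0 u (s i) | i <- enum 'I_N])
          (mask [seq p i | i <- enum 'I_N] u).
Proof.
move=> Hu; rewrite (mask_map (fun i => p (s i)) (fun i => nth 0 u (s i))).
rewrite -[X in mask _ X](enum_nth Hu) (mask_map p (fun i : 'I_N => nth 0 u i)).
exact: (perm_filter_map s (fun i => nth 0 u i) p).
Qed.

Lemma compose_perm_u F Phi u u' w : is_lin2 F -> is_lin2 Phi -> perm_eq u' u ->
  compose F Phi u' w = compose F Phi u w.
Proof.
move=> hF hP H.
change (composeG F Phi (size u') u' w = composeG F Phi (size u) u w).
rewrite (perm_size H); have [s ->] := perm_sigma H.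
rewrite /composeG (reindex_inj (h := fun m : (size u).-tuple bool => [tuple tnth m (s i) | i < size u])); last first.
  move=> m m' E; apply: eq_from_tnth => i.
  by have := congr1 (fun t => tnth t (s^-1 i)%g) E; rewrite /= !tnth_mktuple permKV.
apply: eq_bigr => m _; rewrite mktupleE -map_comp.
rewrite (lphi_perm_a _ _ _ hP (mask_perm s (fun i => ~~ tnth m i) (erefl _))).
rewrite (linext_perm_x _ hF (mask_perm s (tnth m) (erefl _))).
rewrite map_tnth_enum; congr (lin_ext _ _ (Phi' _ (mask _ _) _)).
rewrite -[X in _ = map _ X](map_tnth_enum m) -[RHS]map_comp enumT; exact: eq_map.
Qed.

Lemma compose_perm_w F Phi u w w' : is_lin2 F -> is_lin2 Phi -> perm_eq w' w ->
  compose F Phi u w' = compose F Phi u w.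
Proof. by move=> hF hP H; apply: eq_bigr => m _; apply: lphi_perm_w. Qed.

Lemma mask_set (m : seq bool) (s : seq V) i z : size m = size s -> (i < size s)%N ->
  mask m (set_nth 0 s i z) =
  if nth false m i then set_nth 0 (mask m s) (count id (take i m)) z else mask m s.
Proof.
elim: s m i => [|y s IH] [|bb m] [|i] //= Hs Hi.
  by case: bb.
case: Hs => Hs; rewrite IH //; case: bb; case: (nth false m i) => //=.
Qed.

Lemma count_take_lt (m : seq bool) i : (i < size m)%N -> nth false m i ->
  (count id (take i m) < count id m)%N.
Proof.
elim: m i => [|bb m IH] [|i] //= Hi Hn.
  by rewrite Hn.
by rewrite ltn_add2l IH.
Qed.

Lemma compose_lin_u F Phi u w i : is_lin2 F -> is_lin2 Phi -> (i < size u)%N ->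
  linf (fun z => compose F Phi (set_nth 0 u i z) w).
Proof.
move=> hF hP Hi.
apply: (linf_ext (h' := fun z => composeG F Phi (size u) (set_nth 0 u i z) w)).
  by move=> z; rewrite /compose size_set_nth (maxn_idPr Hi).
apply: linf_sum => m _.
have Hm : size m = size u by rewrite size_tuple.
have Hm' : size (map negb m) = size u by rewrite size_map.
case Hb: (nth false m i).
  apply: (linf_ext (h' := fun z => lin_ext F (set_nth 0 (mask m u) (count id (take i m)) z)
                                 (Phi' Phi (mask (map negb m) u) w))).
    by move=> z; rewrite !mask_set // Hb (nth_map false) ?Hm // Hb.
  rewrite /lin_ext; apply: linf_sum => e _; apply: linf_scale; apply: LF1 => //.
  by rewrite size_mask // count_take_lt // Hm.
set A := mask (map negb m) u.
have Hq : (count id (take i (map negb m)) < size A)%N.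
  by rewrite size_mask // count_take_lt ?Hm' // (nth_map false) ?Hm // Hb.
apply: (linf_ext (h' := fun z => SG F Phi (mask m u) (size A) (size w)
                                  (set_nth 0 A (Ordinal Hq) z) w)).
  move=> z; rewrite !mask_set // Hb (nth_map false) ?Hm // Hb /= linextE.
  by rewrite size_set_nth (maxn_idPr Hq).
exact: SG_lin_a.
Qed.

Lemma compose_lin_w F Phi u w i : is_lin2 F -> is_lin2 Phi -> (i < size w)%N ->
  linf (fun z => compose F Phi u (set_nth 0 w i z)).
Proof.
move=> hF hP Hi; apply: linf_sum => m _.
apply: (linf_ext (h' := fun z => SG F Phi (mask m u) (size (mask (map negb m) u)) (size w)
                                  (mask (map negb m) u) (set_nth 0 w (Ordinal Hi) z))).
  by move=> z; rewrite linextE size_set_nth (maxn_idPr Hi).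
exact: SG_lin_w.
Qed.

Lemma compose_lin2 F Phi : is_lin2 F -> is_lin2 Phi -> is_lin2 (compose F Phi).
Proof.
move=> hF hP; split.
- move=> u1 u2 w c y1 y2.
  have Hi : (size u1 < size (u1 ++ (0%R : V) :: u2))%N by rewrite size_cat /= addnS ltnS leq_addr.
  by have := compose_lin_u w hF hP Hi c y1 y2; rewrite !set_nth_cat.
- move=> u w1 w2 c y1 y2.
  have Hi : (size w1 < size (w1 ++ (0%R : V) :: w2))%N by rewrite size_cat /= addnS ltnS leq_addr.
  by have := compose_lin_w u hF hP Hi c y1 y2; rewrite !set_nth_cat.
- by move=> u u' w H; rewrite (compose_perm_u _ hF hP H).
- by move=> u w w' H; rewrite (compose_perm_w _ hF hP H).
Qed.

End S5.

Section S6.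
Variables (k : fieldType) (V : lmodType k).
Implicit Types (F Phi Psi G H : seq V -> seq V -> V) (u w a b x : seq V).

Lemma eq_aux (p f c : V) : p = f - (c - p) -> f = c.
Proof.
move=> E; apply/eqP; rewrite -subr_eq0; apply/eqP.
by apply: (@addrI _ p); rewrite addr0 addrCA -opprB -E.
Qed.

Lemma lin2_ext (G1 G2 : seq V -> seq V -> V) : (forall a b, G1 a b = G2 a b) -> is_lin2 G2 -> is_lin2 G1.
Proof.
move=> E [h1 h2 h3 h4]; split=> *; rewrite !E.
- exact: h1.
- exact: h2.
- exact: h3.
- exact: h4.
Qed.

Lemma lin2_zero : is_lin2 (fun _ _ : seq V => 0 : V).
Proof. by split=> *; rewrite ?scaler0 ?addr0. Qed.

Lemma lin2_sub (G1 G2 : seq V -> seq V -> V) : is_lin2 G1 -> is_lin2 G2 -> is_lin2 (fun a b => G1 a b - G2 a b).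
Proof.
move=> [h1 h2 h3 h4] [g1 g2 g3 g4]; split.
- by move=> *; rewrite h1 g1 opprD addrACA scalerBr.
- by move=> *; rewrite h2 g2 opprD addrACA scalerBr.
- by move=> u u' w H; rewrite (h3 _ _ _ H) (g3 _ _ _ H).
- by move=> u w w' H; rewrite (h4 _ _ _ H) (g4 _ _ _ H).
Qed.

Lemma lin2_piece (G1 G2 : seq V -> seq V -> V) L : is_lin2 G1 -> is_lin2 G2 ->
  is_lin2 (fun a b => if (size a + size b < L)%N then G1 a b
                     else if (size a + size b == L)%N then G2 a b else 0).
Proof.
move=> [h1 h2 h3 h4] [g1 g2 g3 g4]; split.
- move=> u1 u2 w c y1 y2; rewrite !size_cat /=.
  by case: ifP => _; [rewrite h1|case: ifP => _; [rewrite g1|rewrite scaler0 addr0]].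
- move=> u w1 w2 c y1 y2; rewrite !size_cat /=.
  by case: ifP => _; [rewrite h2|case: ifP => _; [rewrite g2|rewrite scaler0 addr0]].
- move=> u u' w H; rewrite (perm_size H).
  by case: ifP => _; [rewrite (h3 _ _ _ H)|case: ifP => _; rewrite ?(g3 _ _ _ H)].
- move=> u w w' H; rewrite (perm_size H).
  by case: ifP => _; [rewrite (h4 _ _ _ H)|case: ifP => _; rewrite ?(g4 _ _ _ H)].
Qed.

Variables (F1 F2 : seq V -> seq V -> V).
Hypotheses (hF1 : unital_fmul F1) (hF2 : unital_fmul F2).

Let lF2 : is_lin2 F2 := hF2.1.
Let lF1 : is_lin2 F1 := hF1.1.
Let uF2 : forall s, F2 [::] s = piV s := fun s => (hF2.2 s).2.
Let uF1 : forall s, F1 [::] s = piV s := fun s => (hF1.2 s).2.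

Fixpoint phi (f : nat) : seq V -> seq V -> V :=
  if f is f'.+1 then fun u w => F1 u w - (compose F2 (phi f') u w - phi f' u w)
  else fun _ _ => 0.

Definition Phi0 u w := phi (size u + size w).+1 u w.

Lemma phi00 f : phi f [::] [::] = 0.
Proof.
elim: f => //= f IH; rewrite comp00 IH uF1 uF2 /=.
by rewrite !subr0.
Qed.

Lemma Phi000 : Phi0 [::] [::] = 0.
Proof. exact: phi00. Qed.

Lemma stab L : forall f u w, (size u + size w)%N = L -> (L < f)%N -> phi f u w = Phi0 u w.
Proof.
elim/ltn_ind: L => L IH [//|f] u w Hs Hf.
rewrite /Phi0 Hs /=; congr (F1 u w - _).
apply: Loc => //; try exact: phi00.
move=> a b; rewrite Hs => Hab.
rewrite (IH _ Hab f a b) //; last by rewrite (leq_trans Hab).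
by rewrite (IH _ Hab L a b).
Qed.

Lemma PhiE u w : Phi0 u w = F1 u w - (compose F2 Phi0 u w - Phi0 u w).
Proof.
rewrite {1}/Phi0 /=; congr (F1 u w - _).
apply: Loc => //; first exact: phi00; first exact: Phi000.
by move=> a b Hab; rewrite (stab (erefl _) Hab).
Qed.

Lemma mainEq u w : F1 u w = compose F2 Phi0 u w.
Proof. exact: eq_aux (PhiE u w). Qed.

Lemma Sim1 w : Phi0 [::] w = piV w.
Proof.
case: (eqVneq w [::]) => [->|Hw]; first exact: Phi000.
by rewrite -(R0 Phi0 Hw uF2) -mainEq uF1.
Qed.

Lemma Sim2 (Hsim : similar_fmul F1 F2) L : forall u w, (size u + size w)%N = L ->
  (0 < size u)%N -> (size w <= 1)%N -> Phi0 u w = 0.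
Proof.
elim/ltn_ind: L => L IH u w Hs Hu Hw.
pose Psi := fun a b => if (size a + size b < L)%N then Phi0 a b else 0.
have Psi00 : Psi [::] [::] = 0 by rewrite /Psi; case: ifP => // _; exact: Phi000.
have E : compose F2 Phi0 u w - Phi0 u w = compose F2 Psi u w - Psi u w.
  apply: Loc => //; first exact: Phi000.
  by move=> a b; rewrite Hs /Psi => ->.
have Psiuw : Psi u w = 0 by rewrite /Psi Hs ltnn.
have K : compose F2 Psi u w = F2 u w.
  apply: lemK => //.
    move=> bb Hb; rewrite /Psi ifT ?Sim1 //= add0n; lia.
  move=> a bb Ha Hb; rewrite /Psi; case: ifP => // H; apply: (IH _ H) => //.
  exact: leq_trans Hb Hw.
rewrite -mainEq Psiuw subr0 K in E.
have HF : F1 u w = F2 u w.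
  case: w Hw {Hs E K Psiuw Psi Psi00} => [|v [|//]] _.
    by rewrite (hF1.2 u).1 (hF2.2 u).1.
  exact: Hsim.
by apply/eqP; rewrite -oppr_eq0; apply/eqP; apply: (@addrI _ (F2 u w)); rewrite addr0 -{2}E HF.
Qed.

Definition PhiL L a b := if (size a + size b < L)%N then Phi0 a b else 0.

Lemma PhiL_lin L : is_lin2 (PhiL L).
Proof.
elim: L => [|L IH].
  by apply: (lin2_ext _ lin2_zero) => a b; rewrite /PhiL.
have PL0 : PhiL L [::] [::] = 0 by rewrite /PhiL; case: ifP => // _; exact: Phi000.
apply: (lin2_ext _ (lin2_piece L IH (lin2_sub lF1 (compose_lin2 lF2 IH)))) => a b.
rewrite /PhiL; case: (ltngtP (size a + size b) L) => H.
- have H1 : (size a + size b < L.+1)%N by lia.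
  by rewrite H1.
- have H1 : (size a + size b < L.+1)%N = false by lia.
  by rewrite H1.
have H1 : (size a + size b < L.+1)%N by lia.
rewrite H1 PhiE; congr (F1 a b - _).
have -> : compose F2 Phi0 a b - Phi0 a b = compose F2 (PhiL L) a b - PhiL L a b.
  apply: Loc => //; first exact: Phi000.
  by move=> a' b'; rewrite H /PhiL => ->.
by rewrite /PhiL H ltnn subr0.
Qed.

Lemma Phi0_lin : is_lin2 Phi0.
Proof.
split.
- move=> u1 u2 w c y1 y2.
  case: (PhiL_lin (size u1 + (size u2).+1 + size w).+1) => h _ _ _.
  have := h u1 u2 w c y1 y2.
  by rewrite /PhiL !size_cat /= !ltnSn.
- move=> u w1 w2 c y1 y2.
  case: (PhiL_lin (size u + (size w1 + (size w2).+1)).+1) => _ h _ _.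
  have := h u w1 w2 c y1 y2.
  by rewrite /PhiL !size_cat /= !ltnSn.
- move=> u u' w H.
  case: (PhiL_lin (size u + size w).+1) => _ _ h _.
  have := h u u' w H.
  by rewrite /PhiL (perm_size H) !ltnSn.
- move=> u w w' H.
  case: (PhiL_lin (size u + size w).+1) => _ _ _ h.
  have := h u w w' H.
  by rewrite /PhiL (perm_size H) !ltnSn.
Qed.

End S6.

Unset Implicit Arguments.

Theorem mainTheorem5 (k : fieldType) (char0 : [pchar k] =i pred0)
  (V : lmodType k) (F1 F2 : seq V -> seq V -> V)
  (hF1 : unital_fmul F1) (hF2 : unital_fmul F2) :
  similar_fmul F1 F2 <->
  exists Phi : seq V -> seq V -> V,
    is_similarity Phi /\
    forall u w : seq V, F1 u w = compose F2 Phi u w.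
Proof.
split.
  move=> Hsim; exists (Phi0 F1 F2); split; last exact: mainEq.
  split; first exact: Phi0_lin.
    exact: Sim1.
  by move=> u w Hu Hw; apply: (Sim2 hF1 hF2 Hsim (erefl _)).
case=> Phi [[hP H1 H2] HE] u v; rewrite HE.
apply: lemK => //; first exact: hF2.1.
Qed.
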